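(* Let $\varphi:\mathbb{R}\to[0,1]$ be defined by $\varphi(s)=0$ if $s<0$, $\varphi(s)=s$ if $s\in[0,1]$, $\varphi(s)=1$ if $s>1$. Let $$A_0=\begin{pmatrix}-0.1 & 0.5\\ -2 & 0\end{pmatrix},\qquad A_1=\begin{pmatrix}0 & 2\\ -0.5 & -0.1\end{pmatrix},$$ and $g(x,u)=(1+|x|^2)\big(\varphi(u)A_1+(1-\varphi(u))A_0\big)x$ for $x\in\mathbb{R}^2$, $u\in\mathbb{R}$. For $c>0$ consider the time-delay system $$\dot x(t)=c\,\varphi(z_2(t-2))\,g\big(x(t),z_1(t-1)\big)+c\big(1-\varphi(z_2(t-2))\big)A_0x(t),\qquad \dot z_1(t)=-z_1(t),\qquad \dot z_2(t)=-z_2(t),$$ with $x(t)\in\mathbb{R}^2$, $z_1(t),z_2(t)\in\mathbb{R}$ and initial data $x_0\in C([-2,0],\mathbb{R})^2$, $z_{10},z_{20}\in C([-2,0],\mathbb{R})$ prescribed on $[-2,0]$. Then there exists a constant $c>0$ such that, for every $M>0$, there exist $z_{10}\in C([-2,0],\mathbb{R})$ with $\|z_{10}\|\le1$ and $z_{10}(0)=0$, and $x_0\in C([-2,0],\mathbb{R})^2$ with $\|x_0\|\le1$, such that for every $z_{20}\in C([-2,0],\mathbb{R})$ satisfying $z_{20}(t)=1$ for all $t\in[-2,-1]$, the corresponding solution satisfies $|x(1)|\ge 2M$.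
   Context: $|\cdot|$ denotes the Euclidean norm and, for a continuous function $\psi$ on $[-2,0]$, $\|\psi\|=\sup_{\tau\in[-2,0]}|\psi(\tau)|$. *)

(* Defs.v *)
From Stdlib Require Import Reals.
From Coquelicot Require Import Coquelicot.
Open Scope R_scope.

Definition phi (s : R) : R :=
  if Rlt_dec s 0 then 0 else if Rle_dec s 1 then s else 1.

Definition vnorm (x : R * R) : R := sqrt (fst x ^ 2 + snd x ^ 2).

(* A0 = [[-0.1, 0.5], [-2, 0]],  A1 = [[0, 2], [-0.5, -0.1]] acting on column vectors. *)
Definition A0 (x : R * R) : R * R :=
  ((-1/10) * fst x + (1/2) * snd x, (-2) * fst x + 0 * snd x).
Definition A1 (x : R * R) : R * R :=
  (0 * fst x + 2 * snd x, (-1/2) * fst x + (-1/10) * snd x).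

Definition g (x : R * R) (u : R) : R * R :=
  let k := 1 + vnorm x ^ 2 in
  let p := phi u in
  (k * (p * fst (A1 x) + (1 - p) * fst (A0 x)),
   k * (p * snd (A1 x) + (1 - p) * snd (A0 x))).

(* Right-hand side of the x-equation:
   c phi(w2) g(x, w1) + c (1 - phi(w2)) A0 x, with w1 = z1(t-1), w2 = z2(t-2). *)
Definition rhs (c : R) (x : R * R) (w1 w2 : R) : R * R :=
  let q := phi w2 in
  (c * q * fst (g x w1) + c * (1 - q) * fst (A0 x),
   c * q * snd (g x w1) + c * (1 - q) * snd (A0 x)).

Definition cont_on (a b : R) (f : R -> R) : Prop :=
  forall t, a <= t <= b ->
    filterlim f (within (fun s => a <= s <= b) (locally t)) (locally (f t)).

Definition is_solution (c : R) (x01 x02 z10 z20 : R -> R)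
    (x1 x2 z1 z2 : R -> R) : Prop :=
  (forall t, -2 <= t <= 0 ->
     x1 t = x01 t /\ x2 t = x02 t /\ z1 t = z10 t /\ z2 t = z20 t) /\
  cont_on (-2) 1 x1 /\ cont_on (-2) 1 x2 /\
  cont_on (-2) 1 z1 /\ cont_on (-2) 1 z2 /\
  (forall t, 0 < t < 1 ->
     is_derive x1 t (fst (rhs c (x1 t, x2 t) (z1 (t - 1)) (z2 (t - 2)))) /\
     is_derive x2 t (snd (rhs c (x1 t, x2 t) (z1 (t - 1)) (z2 (t - 2)))) /\
     is_derive z1 t (- z1 t) /\
     is_derive z2 t (- z2 t)).

(* Main.v *)
Require Import Defs.
From Stdlib Require Import Reals.
From Coquelicot Require Import Coquelicot.
From Stdlib Require Import Lra Ranalysis5.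
Open Scope R_scope.

Definition qf (s:R) := (1 - 2 * sin s * cos s) / 2.
Definition Bu1 (s:R) := (1 - qf s) * ((-1/10) * cos s + (1/2) * (- sin s)) + qf s * (0 * cos s + 2 * (- sin s)).
Definition Bu2 (s:R) := (1 - qf s) * ((-2) * cos s + 0 * (- sin s)) + qf s * ((-1/2) * cos s + (-1/10) * (- sin s)).
Definition aa (s:R) := cos s * Bu1 s + (- sin s) * Bu2 s.
Definition bb (s:R) := (- sin s) * Bu1 s + (- cos s) * Bu2 s.
Definition dn (s:R) := 51 - cos (4*s) + 15 * sin (4*s).

Ltac pyth H C S :=
  assert (HH0 : 1*(C^2+S^2) = 1) by (rewrite H; ring);
  assert (HH1 : C*(C^2+S^2) = C) by (rewrite H; ring);
  assert (HH2 : S*(C^2+S^2) = S) by (rewrite H; ring);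
  assert (HH3 : C^2*(C^2+S^2) = C^2) by (rewrite H; ring);
  assert (HH4 : C*S*(C^2+S^2) = C*S) by (rewrite H; ring);
  assert (HH5 : S^2*(C^2+S^2) = S^2) by (rewrite H; ring);
  assert (HH6 : C^3*(C^2+S^2) = C^3) by (rewrite H; ring);
  assert (HH7 : C^2*S*(C^2+S^2) = C^2*S) by (rewrite H; ring);
  assert (HH8 : C*S^2*(C^2+S^2) = C*S^2) by (rewrite H; ring);
  assert (HH9 : S^3*(C^2+S^2) = S^3) by (rewrite H; ring).

Lemma CS1 s : cos s ^ 2 + sin s ^ 2 = 1.
Proof. rewrite <- (sin2_cos2 s). unfold Rsqr. ring. Qed.

Lemma cos4 s : cos (4*s) = (cos s ^2 - sin s ^2)^2 - (2 * sin s * cos s)^2.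
Proof. replace (4*s) with (2*(2*s)) by ring. rewrite cos_2a, sin_2a, cos_2a. ring. Qed.
Lemma sin4 s : sin (4*s) = 2 * (2 * sin s * cos s) * (cos s ^2 - sin s ^2).
Proof. replace (4*s) with (2*(2*s)) by ring. rewrite sin_2a, sin_2a, cos_2a. ring. Qed.

Lemma aa_eq s : aa s = (13 - 15 * cos (4*s) - sin (4*s)) / 40.
Proof.
  rewrite cos4, sin4. unfold aa, Bu1, Bu2, qf.
  pose proof (CS1 s) as H. set (C := cos s) in *. set (S := sin s) in *.
  pyth H C S. lra.
Qed.
Lemma bb_eq s : bb s = dn s / 40.
Proof.
  unfold dn. rewrite cos4, sin4. unfold bb, Bu1, Bu2, qf.
  pose proof (CS1 s) as H. set (C := cos s) in *. set (S := sin s) in *.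
  pyth H C S. lra.
Qed.
Lemma Bu1_eq s : aa s * cos s + bb s * (- sin s) = Bu1 s.
Proof.
  unfold aa, bb. pose proof (CS1 s) as H. set (B1 := Bu1 s). set (B2 := Bu2 s).
  set (C := cos s) in *. set (S := sin s) in *.
  transitivity (B1 * (C^2+S^2)). ring. rewrite H; ring.
Qed.
Lemma Bu2_eq s : aa s * (- sin s) + bb s * (- cos s) = Bu2 s.
Proof.
  unfold aa, bb. pose proof (CS1 s) as H. set (B1 := Bu1 s). set (B2 := Bu2 s).
  set (C := cos s) in *. set (S := sin s) in *.
  transitivity (B2 * (C^2+S^2)). ring. rewrite H; ring.
Qed.
Lemma qf_bounds s : 0 <= qf s <= 1.
Proof.
  unfold qf. pose proof (CS1 s) as H. set (C := cos s) in *. set (S := sin s) in *.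
  pose proof (pow2_ge_0 (S-C)). pose proof (pow2_ge_0 (S+C)).
  split; nra.
Qed.
Lemma dn_bounds s : 35 <= dn s <= 67.
Proof.
  unfold dn. pose proof (CS1 (4*s)) as H. set (C := cos (4*s)) in *. set (S := sin (4*s)) in *.
  assert ((- C + 15 * S)^2 <= 226) by (pose proof (pow2_ge_0 (15*C+S)); nra).
  split; nra.
Qed.

Lemma RInt_correct_R (f : R -> R) a b : ex_RInt f a b -> is_RInt f a b (RInt f a b).
Proof. apply (@RInt_correct R_CompleteNormedModule). Qed.
Lemma ex_RInt_cont_R (f : R -> R) a b : (forall z, Rmin a b <= z <= Rmax a b -> continuous f z) -> ex_RInt f a b.
Proof. apply (@ex_RInt_continuous R_CompleteNormedModule). Qed.
Lemma is_RInt_unique_R (f : R -> R) a b l : is_RInt f a b l -> RInt f a b = l.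
Proof. apply (@is_RInt_unique R_CompleteNormedModule). Qed.
Lemma exd_cont (f : R -> R) x : ex_derive f x -> continuous f x.
Proof. apply (@ex_derive_continuous R_AbsRing R_NormedModule). Qed.

Lemma ln_le_xm1 y : 0 < y -> ln y <= y - 1.
Proof. intros Hy. pose proof (exp_ineq1_le (ln y)). rewrite exp_ln in H; lra. Qed.

Lemma dn_pos s : 0 < dn s.
Proof. pose proof (dn_bounds s); lra. Qed.

Lemma cont_dn x : continuous dn x.
Proof. apply (@ex_derive_continuous R_AbsRing R_NormedModule). unfold dn. auto_derive. auto. Qed.

Lemma cont_idn x : continuous (fun x => / dn x) x.
Proof.
  apply (continuous_comp dn (fun y => / y)). apply cont_dn.
  apply (@ex_derive_continuous R_AbsRing R_NormedModule). auto_derive. pose proof (dn_pos x); lra.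
Qed.

Definition J (s:R) := RInt (fun x => / dn x) 0 s.

Lemma ex_RInt_idn a b : ex_RInt (fun x => / dn x) a b.
Proof. apply (@ex_RInt_continuous R_CompleteNormedModule). intros; apply cont_idn. Qed.

Lemma J_deriv s : is_derive J s (/ dn s).
Proof.
  apply (is_derive_RInt (fun x => / dn x) J 0 s).
  - apply filter_forall. intros b. apply RInt_correct_R. apply ex_RInt_idn.
  - apply cont_idn.
Qed.

Lemma RInt_cst a b k : RInt (fun _ => k) a b = (b - a) * k.
Proof. rewrite RInt_const. reflexivity. Qed.

Lemma J_pos s : 0 <= s -> s / 67 <= J s <= s / 35.
Proof.
  intros Hs. unfold J.
  assert (H1: RInt (fun _ => /67) 0 s <= RInt (fun x => / dn x) 0 s).
  { apply RInt_le; auto. apply ex_RInt_const. apply ex_RInt_idn.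
    intros x _. pose proof (dn_bounds x). apply Rinv_le_contravar; lra. }
  assert (H2: RInt (fun x => / dn x) 0 s <= RInt (fun _ => /35) 0 s).
  { apply RInt_le; auto. apply ex_RInt_idn. apply ex_RInt_const.
    intros x _. pose proof (dn_bounds x). apply Rinv_le_contravar; lra. }
  rewrite RInt_cst in H1, H2. lra.
Qed.

Lemma J_neg s : s <= 0 -> s / 35 <= J s <= s / 67.
Proof.
  intros Hs. unfold J. rewrite <- opp_RInt_swap by apply ex_RInt_idn.
  unfold opp; simpl.
  assert (H1: RInt (fun _ => /67) s 0 <= RInt (fun x => / dn x) s 0).
  { apply RInt_le; auto. apply ex_RInt_const. apply ex_RInt_idn.
    intros x _. pose proof (dn_bounds x). apply Rinv_le_contravar; lra. }
  assert (H2: RInt (fun x => / dn x) s 0 <= RInt (fun _ => /35) s 0).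
  { apply RInt_le; auto. apply ex_RInt_idn. apply ex_RInt_const.
    intros x _. pose proof (dn_bounds x). apply Rinv_le_contravar; lra. }
  rewrite RInt_cst in H1, H2. lra.
Qed.

Definition K (s:R) := (ln 50 - ln (dn s)) / 4 + 13 * J s.

Lemma lnpart s : -1/10 <= (ln 50 - ln (dn s)) / 4 <= 1/8.
Proof.
  pose proof (dn_bounds s).
  rewrite <- ln_div by lra.
  split.
  - assert (ln (dn s / 50) <= dn s / 50 - 1) by (apply ln_le_xm1; lra).
    replace (ln (50 / dn s)) with (- ln (dn s / 50)).
    2:{ rewrite ln_div by lra. rewrite ln_div by lra. ring. }
    lra.
  - assert (ln (50 / dn s) <= 50 / dn s - 1) by (apply ln_le_xm1; apply Rdiv_lt_0_compat; lra).
    assert (50 / dn s <= 50 / 35). { apply Rmult_le_compat_l. lra. apply Rinv_le_contravar; lra. }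
    lra.
Qed.

Lemma K_deriv s : is_derive K s (aa s / bb s).
Proof.
  unfold K.
  evar (l : R). 
  assert (Hd: is_derive (fun s => (ln 50 - ln (dn s)) / 4 + 13 * J s) s l).
  { unfold dn. auto_derive.
    - split. pose proof (dn_pos s). unfold dn in H. lra.
      split; auto. exists (/ dn s). apply J_deriv.
    - unfold l. reflexivity. }
  replace (aa s / bb s) with l. exact Hd.
  unfold l. replace (Derive (fun x => J x) s) with (/ dn s) by (symmetry; apply is_derive_unique; apply J_deriv).
  rewrite aa_eq, bb_eq. pose proof (dn_pos s). unfold dn in *. field. lra.
Qed.

Lemma K_low s : -1 <= s -> -2/3 + s/6 <= K s.
Proof.
  intros Hs. unfold K. pose proof (lnpart s).
  destruct (Rle_dec 0 s).
  - pose proof (J_pos s r). lra.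
  - pose proof (J_neg s ltac:(lra)). lra.
Qed.

Lemma K_up s : s <= -1 -> K s <= 0.
Proof.
  intros Hs. unfold K. pose proof (lnpart s). pose proof (J_neg s ltac:(lra)). lra.
Qed.

Lemma K_up2 s : 0 <= s -> K s <= 1/8 + 13 * s / 35.
Proof.
  intros Hs. unfold K. pose proof (lnpart s). pose proof (J_pos s Hs). lra.
Qed.

Lemma K_cont s : continuous K s.
Proof. apply (@ex_derive_continuous R_AbsRing R_NormedModule). eexists. apply K_deriv. Qed.

Definition clamp (t:R) := Rmax 0 (Rmin 1 t).

Lemma clamp_bounds t : 0 <= clamp t <= 1.
Proof. unfold clamp, Rmax, Rmin. repeat destruct Rle_dec; lra. Qed.
Lemma clamp_lip t s : Rabs (clamp t - clamp s) <= Rabs (t - s).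
Proof. unfold clamp, Rmax, Rmin. repeat destruct Rle_dec; unfold Rabs; repeat destruct Rcase_abs; lra. Qed.
Lemma clamp_in t : 0 <= t <= 1 -> clamp t = t.
Proof. intros. unfold clamp, Rmax, Rmin. repeat destruct Rle_dec; lra. Qed.
Lemma clamp_le0 t : t <= 0 -> clamp t = 0.
Proof. intros. unfold clamp, Rmax, Rmin. repeat destruct Rle_dec; lra. Qed.
Lemma clamp_ge1 t : 1 <= t -> clamp t = 1.
Proof. intros. unfold clamp, Rmax, Rmin. repeat destruct Rle_dec; lra. Qed.

Lemma inverse_fun (tau : R -> R) (a b m : R) :
  a < b -> 0 < m ->
  (forall x, a <= x <= b -> continuity_pt tau x) ->
  tau a = 0 -> tau b = 1 ->
  (forall s t, a <= s -> s <= t -> t <= b -> m * (t - s) <= tau t - tau s) ->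
  exists Th : R -> R,
    (forall t, a <= Th t <= b) /\
    (forall t, tau (Th t) = clamp t) /\
    (forall t s, Rabs (Th t - Th s) <= Rabs (t - s) / m) /\
    (forall t, t <= 0 -> Th t = a) /\
    (forall t, 1 <= t -> Th t = b) /\
    (forall t d, 0 < t < 1 -> 0 < d -> is_derive tau (Th t) d -> is_derive Th t (/ d)).
Proof.
  intros Hab Hm Hc Ha Hb Hsl.
  assert (Hy : forall t, tau a <= clamp t <= tau b).
  { intros t; rewrite Ha, Hb; apply clamp_bounds. }
  exists (fun t => proj1_sig (f_interv_is_interv tau a b (clamp t) Hab (Hy t) Hc)).
  set (Th := fun t => proj1_sig (f_interv_is_interv tau a b (clamp t) Hab (Hy t) Hc)).
  assert (P1 : forall t, a <= Th t <= b /\ tau (Th t) = clamp t).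
  { intros t. unfold Th. destruct (f_interv_is_interv tau a b (clamp t) Hab (Hy t) Hc) as [x Hx]. exact Hx. }
  assert (Hsl2 : forall x y, a <= x <= b -> a <= y <= b -> m * Rabs (x - y) <= Rabs (tau x - tau y)).
  { intros x y Hx Hy'. destruct (Rle_dec y x).
    - pose proof (Hsl y x ltac:(lra) r ltac:(lra)).
      assert (0 <= m * (x-y)) by (apply Rmult_le_pos; lra).
      rewrite (Rabs_right (x-y)) by lra. rewrite Rabs_right by lra. lra.
    - pose proof (Hsl x y ltac:(lra) ltac:(lra) ltac:(lra)).
      assert (0 <= m * (y-x)) by (apply Rmult_le_pos; lra).
      rewrite (Rabs_left (x-y)) by lra. rewrite Rabs_left1 by lra. lra. }
  assert (Lip : forall t s, Rabs (Th t - Th s) <= Rabs (t - s) / m).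
  { intros t s. destruct (P1 t) as [Ht1 Ht2]. destruct (P1 s) as [Hs1 Hs2].
    pose proof (Hsl2 _ _ Ht1 Hs1). rewrite Ht2, Hs2 in H.
    pose proof (clamp_lip t s).
    apply (Rmult_le_reg_l m). lra.
    replace (m * (Rabs (t - s) / m)) with (Rabs (t-s)) by (field; lra). lra. }
  split; [intros t; apply P1|]. split; [intros t; apply P1|]. split; [exact Lip|].
  split.
  { intros t Ht. change (Th t = a). destruct (P1 t) as [H1 H2]. rewrite clamp_le0 in H2 by lra.
    pose proof (Hsl a (Th t) ltac:(lra) ltac:(lra) ltac:(lra)). rewrite H2, Ha in H.
    destruct (Rle_dec (Th t) a). lra. assert (0 < m * (Th t - a)) by (apply Rmult_lt_0_compat; lra). lra. }
  split.
  { intros t Ht. change (Th t = b). destruct (P1 t) as [H1 H2]. rewrite clamp_ge1 in H2 by lra.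
    pose proof (Hsl (Th t) b ltac:(lra) ltac:(lra) ltac:(lra)). rewrite H2, Hb in H.
    destruct (Rle_dec b (Th t)). lra. assert (0 < m * (b - Th t)) by (apply Rmult_lt_0_compat; lra). lra. }
  intros t d Ht Hd Hder. change (is_derive Th t (/ d)).
  apply is_derive_Reals. apply is_derive_Reals in Hder.
  intros eps Heps.
  destruct (Hder (eps * m * d)) as [dl Hdl].
  { apply Rmult_lt_0_compat; [apply Rmult_lt_0_compat|]; lra. }
  assert (Hdel : 0 < Rmin (dl * m) (Rmin t (1 - t))).
  { apply Rmin_pos. apply Rmult_lt_0_compat. apply cond_pos. lra. apply Rmin_pos; lra. }
  exists (mkposreal _ Hdel). intros hh Hh0 Hhd. simpl in Hhd.
  assert (Hhd1 : Rabs hh < dl * m) by (eapply Rlt_le_trans; [exact Hhd| apply Rmin_l]).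
  assert (Hhd2 : Rabs hh < Rmin t (1-t)) by (eapply Rlt_le_trans; [exact Hhd| apply Rmin_r]).
  assert (Hth : 0 < t + hh < 1).
  { pose proof (Rmin_l t (1-t)). pose proof (Rmin_r t (1-t)).
    unfold Rabs in Hhd2; destruct Rcase_abs in Hhd2; lra. }
  set (y := Th t). set (k := Th (t + hh) - y).
  destruct (P1 t) as [Hy1 Hy2]. destruct (P1 (t+hh)) as [Hz1 Hz2].
  rewrite clamp_in in Hy2, Hz2 by lra. change (a <= y <= b) in Hy1.
  assert (Hk : tau (y + k) - tau y = hh).
  { unfold k, y. replace (Th t + (Th (t + hh) - Th t)) with (Th (t+hh)) by ring. lra. }
  assert (Hk0 : k <> 0). { intros E. rewrite E, Rplus_0_r in Hk. lra. }
  assert (Hkb : Rabs k < dl).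
  { pose proof (Lip (t+hh) t). replace (t + hh - t) with hh in H by ring.
    fold y in H. fold k in H.
    apply (Rmult_lt_reg_r m). lra. 
    apply Rle_lt_trans with (Rabs hh). 2: lra.
    apply (Rmult_le_reg_r (/m)). apply Rinv_0_lt_compat; lra.
    rewrite Rmult_assoc, Rinv_r, Rmult_1_r by lra. exact H. }
  pose proof (Hdl k Hk0 Hkb) as HQ. change (Rabs ((tau (y + k) - tau y)/k - d) < eps*m*d) in HQ. rewrite Hk in HQ.
  assert (HQm : m <= hh / k).
  { assert (Hyk : a <= y + k <= b) by (unfold k; lra).
    destruct (Rlt_dec 0 k).
    - pose proof (Hsl y (y+k) ltac:(lra) ltac:(lra) ltac:(lra)).
      replace (y + k - y) with k in H by ring.
      apply (Rmult_le_reg_r k); auto. unfold Rdiv. rewrite Rmult_assoc, Rinv_l by lra. lra.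
    - assert (k < 0) by lra.
      pose proof (Hsl (y+k) y ltac:(lra) ltac:(lra) ltac:(lra)).
      replace (y - (y + k)) with (-k) in H0 by ring.
      apply (Rmult_le_reg_r (-k)). lra. 
      replace (hh / k * - k) with (- hh) by (field; lra). lra. }
  replace (k / hh - / d) with ((d - hh / k) / ((hh / k) * d)).
  2:{ fold y. fold k. field. repeat split; auto; apply Rgt_not_eq; lra. }
  rewrite Rabs_div. 2:{ apply Rgt_not_eq. apply Rmult_lt_0_compat; lra. }
  rewrite (Rabs_right ((hh/k)*d)) by (apply Rle_ge; apply Rmult_le_pos; lra).
  rewrite Rabs_minus_sym.
  apply (Rmult_lt_reg_r (hh / k * d)). apply Rmult_lt_0_compat; lra.
  unfold Rdiv at 1. rewrite Rmult_assoc, Rinv_l, Rmult_1_r.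
  2:{ apply Rgt_not_eq. apply Rmult_lt_0_compat; lra. }
  apply Rlt_le_trans with (eps * m * d). exact HQ.
  rewrite Rmult_assoc. apply Rmult_le_compat_l. lra. apply Rmult_le_compat_r; lra.
Qed.

Lemma exp_le x y : x <= y -> exp x <= exp y.
Proof. intros H. destruct (Rle_lt_or_eq_dec x y H). left; apply exp_increasing; auto. subst; lra. Qed.

Lemma bb_bounds s : 35/40 <= bb s <= 67/40.
Proof. rewrite bb_eq. pose proof (dn_bounds s). lra. Qed.

Definition h (s:R) := / (40 * (1 + exp (2 * K s)) * bb s).

Lemma h_den_pos s : 0 < 40 * (1 + exp (2 * K s)) * bb s.
Proof. pose proof (exp_pos (2 * K s)). pose proof (bb_bounds s).
  apply Rmult_lt_0_compat; lra. Qed.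

Lemma h_pos s : 0 < h s.
Proof. unfold h. apply Rinv_0_lt_compat, h_den_pos. Qed.

Lemma bb_exd s : ex_derive bb s.
Proof. unfold bb, Bu1, Bu2, qf. auto_derive. auto. Qed.

Lemma h_exd s : ex_derive h s.
Proof. unfold h. auto_derive. split. eexists; apply K_deriv. split. apply bb_exd. split; auto.
  pose proof (h_den_pos s). lra. Qed.

Lemma h_cont s : continuous h s.
Proof. apply exd_cont, h_exd. Qed.

Lemma ex_RInt_h a b : ex_RInt h a b.
Proof. apply ex_RInt_cont_R. intros; apply h_cont. Qed.

Lemma h_low1 s : s <= -1 -> / 134 <= h s.
Proof.
  intros Hs. unfold h. pose proof (K_up s Hs). pose proof (bb_bounds s).
  assert (exp (2 * K s) <= 1) by (rewrite <- exp_0; apply exp_le; lra).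
  pose proof (exp_pos (2 * K s)).
  apply Rinv_le_contravar. apply h_den_pos.
  assert ((1 + exp (2 * K s)) * bb s <= 2 * (67/40)).
  { apply Rmult_le_compat; lra. }
  lra.
Qed.

Lemma h_lowK s Km : K s <= Km -> / (67 * (1 + exp (2 * Km))) <= h s.
Proof.
  intros Hs. unfold h. pose proof (bb_bounds s).
  assert (exp (2 * K s) <= exp (2*Km)) by (apply exp_le; lra).
  pose proof (exp_pos (2 * K s)).
  apply Rinv_le_contravar. apply h_den_pos.
  assert ((1 + exp (2 * K s)) * bb s <= (1 + exp (2*Km)) * (67/40)).
  { apply Rmult_le_compat; lra. }
  lra.
Qed.

Lemma h_up s : -1 <= s -> h s <= exp (4/3 - s/3) / 35.
Proof.
  intros Hs. unfold h. pose proof (K_low s Hs). pose proof (bb_bounds s).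
  pose proof (exp_pos (2 * K s)).
  assert (E : exp (4/3 - s/3) * exp (2 * K s) >= 1).
  { rewrite <- exp_plus. rewrite <- exp_0. apply Rle_ge, exp_le. lra. }
  apply Rle_trans with (/ (35 * exp (2 * K s))).
  - apply Rinv_le_contravar. apply Rmult_lt_0_compat; lra.
    assert (exp (2 * K s) * (35/40) <= (1 + exp (2 * K s)) * bb s).
    { apply Rmult_le_compat; lra. } lra.
  - rewrite Rinv_mult. unfold Rdiv. rewrite Rmult_comm.
    apply Rmult_le_compat_r. lra.
    apply (Rmult_le_reg_r (exp (2 * K s))). auto.
    rewrite Rinv_l by lra. lra.
Qed.

Lemma int_h_up X : -1 <= X -> RInt h (-1) X <= 27/35.
Proof.
  intros HX.
  assert (H1 : RInt h (-1) X <= RInt (fun s => exp (4/3 - s/3) / 35) (-1) X).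
  { apply RInt_le; auto. apply ex_RInt_h. apply ex_RInt_cont_R. intros z _.
    apply exd_cont. auto_derive. auto.
    intros x Hx. apply h_up. lra. }
  assert (H2 : is_RInt (fun s => exp (4/3 - s/3) / 35) (-1) X
     (minus ((fun s => - (3/35) * exp (4/3 - s/3)) X) ((fun s => - (3/35) * exp (4/3 - s/3)) (-1)))).
  { apply (@is_RInt_derive R_CompleteNormedModule (fun s => - (3/35) * exp (4/3 - s/3)) (fun s => exp (4/3 - s/3) / 35)).
    - intros x _. auto_derive. auto. replace (4/3 + - (x * /3)) with (4/3 - x/3) by field. field.
    - intros x _. apply exd_cont. auto_derive. auto. }
  apply is_RInt_unique_R in H2. rewrite H2 in H1. unfold minus, plus, opp in H1; simpl in H1.
  pose proof (exp_pos (4/3 - X/3)).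
  assert (exp (4/3 - -1/3) <= 9).
  { apply Rle_trans with (exp 1 * exp 1). rewrite <- exp_plus. apply exp_le. lra.
    pose proof exp_le_3. pose proof (exp_pos 1). nra. }
  replace (4/3 - -1/3) with (4/3 - (-1)/3) in H by field.
  lra.
Qed.

Lemma int_h_ge0 a b : a <= b -> 0 <= RInt h a b.
Proof.
  intros Hab. assert (RInt (fun _ => 0) a b <= RInt h a b).
  { apply RInt_le; auto. apply ex_RInt_const. apply ex_RInt_h. intros; left; apply h_pos. }
  rewrite RInt_cst in H. lra.
Qed.

Lemma int_h_low a b m : a <= b -> (forall s, a <= s <= b -> m <= h s) -> m * (b - a) <= RInt h a b.
Proof.
  intros Hab Hm. assert (RInt (fun _ => m) a b <= RInt h a b).
  { apply RInt_le; auto. apply ex_RInt_const. apply ex_RInt_h. intros; apply Hm; lra. }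
  rewrite RInt_cst in H. lra.
Qed.

Lemma chasles_h a b c : RInt h a b + RInt h b c = RInt h a c.
Proof. apply (@RInt_Chasles R_CompleteNormedModule); apply ex_RInt_h. Qed.

Lemma F_deriv X a : is_derive (fun a => RInt h a X) a (- h a).
Proof.
  apply (@is_derive_RInt' R_NormedModule h (fun a => RInt h a X) a X).
  apply filter_forall. intros b. apply RInt_correct_R, ex_RInt_h. apply h_cont.
Qed.

Lemma tau_deriv p0 s : is_derive (fun s => RInt h p0 s) s (h s).
Proof.
  apply (is_derive_RInt h (fun s => RInt h p0 s) p0 s).
  apply filter_forall. intros b. apply RInt_correct_R, ex_RInt_h. apply h_cont.
Qed.

Lemma choose_p0 X : 0 <= X -> exists p0, -135 <= p0 <= -1 /\ RInt h p0 X = 1.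
Proof.
  intros HX.
  assert (Hc : forall x, -135 <= x <= -1 -> continuity_pt (fun a => - RInt h a X) x).
  { intros x _. apply continuity_pt_filterlim. 
    apply (exd_cont (fun a => - RInt h a X)). exists (opp (- h x)). apply (@is_derive_opp R_AbsRing R_NormedModule (fun a => RInt h a X)). apply F_deriv. }
  assert (Hy : (fun a => - RInt h a X) (-135) <= -1 <= (fun a => - RInt h a X) (-1)).
  { simpl. pose proof (int_h_up X ltac:(lra)). split; try lra.
    rewrite <- (chasles_h (-135) (-1) X).
    pose proof (int_h_ge0 (-1) X ltac:(lra)).
    pose proof (int_h_low (-135) (-1) (/134) ltac:(lra) ltac:(intros; apply h_low1; lra)).
    lra. }
  destruct (f_interv_is_interv _ (-135) (-1) (-1) ltac:(lra) Hy Hc) as [p0 [Hp1 Hp2]].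
  exists p0. split; auto. lra.
Qed.

Lemma K_upper s X : 0 <= X -> s <= X -> K s <= 1/8 + 13 * X / 35.
Proof.
  intros HX Hs. destruct (Rle_dec s 0).
  - unfold K. pose proof (lnpart s). pose proof (J_neg s r). lra.
  - pose proof (K_up2 s ltac:(lra)). lra.
Qed.

Lemma make_Theta X : 0 <= X ->
  exists p0 (Th : R -> R), -135 <= p0 <= -1 /\
    (forall t, p0 <= Th t <= X) /\
    (forall t, t <= 0 -> Th t = p0) /\
    (forall t, 1 <= t -> Th t = X) /\
    (forall t, continuous Th t) /\
    (forall t, 0 < t < 1 -> is_derive Th t (/ h (Th t))).
Proof.
  intros HX. destruct (choose_p0 X HX) as [p0 [Hp0 Hint]].
  set (m := / (67 * (1 + exp (2 * (1/8 + 13 * X / 35))))).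
  assert (Hm : 0 < m). { unfold m. apply Rinv_0_lt_compat. pose proof (exp_pos (2 * (1/8 + 13 * X / 35))). lra. }
  destruct (inverse_fun (fun s => RInt h p0 s) p0 X m) as [Th [T1 [T2 [T3 [T4 [T5 T6]]]]]]; auto.
  - lra.
  - intros x _. apply continuity_pt_filterlim. apply exd_cont. eexists. apply tau_deriv.
  - simpl. apply (RInt_point p0 h).
  - intros s t Hs Hst Ht. simpl. rewrite <- (chasles_h p0 s t).
    assert (m * (t - s) <= RInt h s t). 
    { apply int_h_low; auto. intros z Hz. apply h_lowK. apply K_upper; lra. }
    lra.
  - exists p0, Th. split; [lra|]. split; [exact T1|]. split; [exact T4|]. split; [exact T5|]. split.
    + intros t P [eps HP].
      assert (Hd : 0 < eps * m) by (apply Rmult_lt_0_compat; [apply cond_pos|lra]).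
      exists (mkposreal _ Hd). intros y Hy. apply HP.
      pose proof (T3 y t). change (Rabs (y - t) < eps * m) in Hy.
      change (Rabs (Th y - Th t) < eps).
      apply Rle_lt_trans with (Rabs (y - t) / m). auto.
      apply (Rmult_lt_reg_r m). lra. unfold Rdiv. rewrite Rmult_assoc, Rinv_l, Rmult_1_r by lra. lra.
    + intros t Ht. apply T6; auto. apply h_pos. apply tau_deriv.
Qed.

Definition F1 (p a b : R) := 40 * (1 + (a^2 + b^2)) * (p * (0 * a + 2 * b) + (1 - p) * ((-1/10) * a + (1/2) * b)).
Definition F2 (p a b : R) := 40 * (1 + (a^2 + b^2)) * (p * ((-1/2) * a + (-1/10) * b) + (1 - p) * ((-2) * a + 0 * b)).

Lemma vnorm2 a b : vnorm (a, b) ^ 2 = a^2 + b^2.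
Proof. unfold vnorm; simpl. apply pow2_sqrt. nra. Qed.

Lemma phi_id x : 0 <= x <= 1 -> phi x = x.
Proof. intros. unfold phi. destruct Rlt_dec; [lra|]. destruct Rle_dec; lra. Qed.
Lemma phi_bounds x : 0 <= phi x <= 1.
Proof. unfold phi. destruct Rlt_dec; [lra|]. destruct Rle_dec; lra. Qed.

Lemma rhs1 a b w : fst (rhs 40 (a, b) w 1) = F1 (phi w) a b.
Proof. unfold rhs, g, F1, Defs.A0, Defs.A1; cbn [fst snd]. rewrite (phi_id 1) by lra. rewrite vnorm2. ring. Qed.
Lemma rhs2 a b w : snd (rhs 40 (a, b) w 1) = F2 (phi w) a b.
Proof. unfold rhs, g, F2, Defs.A0, Defs.A1; cbn [fst snd]. rewrite (phi_id 1) by lra. rewrite vnorm2. ring. Qed.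

Lemma lip p y1 y2 x1 x2 R2 : 0 <= p <= 1 -> y1^2 + y2^2 <= R2 -> x1^2 + x2^2 <= R2 ->
  (y1 - x1) * (F1 p y1 y2 - F1 p x1 x2) + (y2 - x2) * (F2 p y1 y2 - F2 p x1 x2)
  <= 40 * (1 + 8 * R2) * ((y1 - x1)^2 + (y2 - x2)^2).
Proof.
  intros Hp Hy Hx.
  set (e1 := y1 - x1). set (e2 := y2 - x2).
  set (B11 := - (1-p)/10). set (B12 := (1-p)/2 + 2*p). set (B21 := -2*(1-p) - p/2). set (B22 := -p/10).
  set (E := e1^2 + e2^2).
  set (eBe := e1 * (B11 * e1 + B12 * e2) + e2 * (B21 * e1 + B22 * e2)).
  set (ew := e1 * (y1 + x1) + e2 * (y2 + x2)).
  set (z1 := B11 * x1 + B12 * x2). set (z2 := B21 * x1 + B22 * x2).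
  set (ez := e1 * z1 + e2 * z2).
  assert (Hid : e1 * (F1 p y1 y2 - F1 p x1 x2) + e2 * (F2 p y1 y2 - F2 p x1 x2)
             = 40 * ((1 + (y1^2+y2^2)) * eBe + ew * ez)).
  { unfold ez, ew, eBe, z1, z2, B11, B12, B21, B22, e1, e2, F1, F2. field. }
  rewrite Hid.
  assert (HE : 0 <= E) by (unfold E; nra).
  assert (H1 : eBe <= 3/4 * E).
  { unfold eBe, E, B11, B12, B21, B22.
    pose proof (pow2_ge_0 (e1 - e2)). pose proof (pow2_ge_0 (e1 + e2)). nra. }
  assert (H1' : (1 + (y1^2+y2^2)) * eBe <= (1 + R2) * E).
  { destruct (Rle_dec 0 eBe).
    - apply Rle_trans with ((1 + R2) * (3/4 * E)). apply Rmult_le_compat; nra. nra.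
    - assert (0 <= 1 + (y1^2+y2^2)) by nra. nra. }
  assert (H2 : ew ^ 2 <= E * ((y1+x1)^2 + (y2+x2)^2)).
  { unfold ew, E. pose proof (pow2_ge_0 (e1 * (y2+x2) - e2 * (y1+x1))). nra. }
  assert (H3 : (y1+x1)^2 + (y2+x2)^2 <= 4 * R2).
  { pose proof (pow2_ge_0 (y1 - x1)). pose proof (pow2_ge_0 (y2 - x2)). nra. }
  assert (H4 : ez ^ 2 <= E * (z1^2 + z2^2)).
  { unfold ez, E. pose proof (pow2_ge_0 (e1 * z2 - e2 * z1)). nra. }
  assert (H5 : z1^2 + z2^2 <= 9 * R2).
  { assert (z1^2 <= (B11^2 + B12^2) * (x1^2 + x2^2)).
    { unfold z1. pose proof (pow2_ge_0 (B11 * x2 - B12 * x1)). nra. }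
    assert (z2^2 <= (B21^2 + B22^2) * (x1^2 + x2^2)).
    { unfold z2. pose proof (pow2_ge_0 (B21 * x2 - B22 * x1)). nra. }
    assert (B11^2 + B12^2 + B21^2 + B22^2 <= 9).
    { unfold B11, B12, B21, B22. nra. }
    assert (0 <= x1^2 + x2^2) by nra.
    assert ((B11^2 + B12^2) * (x1^2 + x2^2) + (B21^2 + B22^2) * (x1^2 + x2^2) <= 9 * R2).
    { replace ((B11^2 + B12^2) * (x1^2 + x2^2) + (B21^2 + B22^2) * (x1^2 + x2^2))
        with ((B11^2 + B12^2 + B21^2 + B22^2) * (x1^2 + x2^2)) by ring.
      apply Rle_trans with (9 * (x1^2+x2^2)). apply Rmult_le_compat_r; lra. lra. }
    lra. }
  assert (H6 : ew * ez <= (ew^2 + ez^2) / 2) by (pose proof (pow2_ge_0 (ew - ez)); nra).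
  assert (H7 : ew^2 + ez^2 <= E * (13 * R2)).
  { assert (E * ((y1+x1)^2 + (y2+x2)^2) <= E * (4 * R2)) by (apply Rmult_le_compat_l; lra).
    assert (E * (z1^2 + z2^2) <= E * (9 * R2)) by (apply Rmult_le_compat_l; lra).
    lra. }
  assert (0 <= R2) by nra.
  nra.
Qed.

Lemma cpt_sq (f g : R -> R) x : continuity_pt f x -> continuity_pt g x ->
  continuity_pt (fun s => (f s - g s) * (f s - g s)) x.
Proof.
  intros Hf Hg. assert (H : continuity_pt (fun s => f s - g s) x) by (apply (continuity_pt_minus f g); auto).
  apply (continuity_pt_mult (fun s => f s - g s) (fun s => f s - g s)); auto.
Qed.

Lemma gronwall (P : R -> R) (y1 y2 w1 w2 : R -> R) (b : R) :
  0 < b -> (forall t, 0 <= P t <= 1) ->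
  (forall t, 0 <= t <= b -> continuity_pt y1 t /\ continuity_pt y2 t /\ continuity_pt w1 t /\ continuity_pt w2 t) ->
  (forall t, 0 < t < b -> is_derive y1 t (F1 (P t) (y1 t) (y2 t)) /\ is_derive y2 t (F2 (P t) (y1 t) (y2 t)) /\
                         is_derive w1 t (F1 (P t) (w1 t) (w2 t)) /\ is_derive w2 t (F2 (P t) (w1 t) (w2 t))) ->
  y1 0 = w1 0 -> y2 0 = w2 0 ->
  forall t, 0 <= t <= b -> y1 t = w1 t /\ y2 t = w2 t.
Proof.
  intros Hb HP Hc Hd H01 H02.
  set (f := fun s => y1 s * y1 s + y2 s * y2 s + (w1 s * w1 s + w2 s * w2 s)).
  destruct (continuity_ab_maj f 0 b) as [Mx [HMx _]]. lra.
  { intros c Hc'. destruct (Hc c Hc') as [A1' [A2' [A3' A4']]]. unfold f.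
    apply (continuity_pt_plus (fun s => y1 s * y1 s + y2 s * y2 s) (fun s => w1 s * w1 s + w2 s * w2 s)).
    apply (continuity_pt_plus (fun s => y1 s * y1 s) (fun s => y2 s * y2 s));
      apply (continuity_pt_mult); auto.
    apply (continuity_pt_plus (fun s => w1 s * w1 s) (fun s => w2 s * w2 s));
      apply (continuity_pt_mult); auto. }
  set (R2 := f Mx).
  assert (By : forall s, 0 <= s <= b -> y1 s ^ 2 + y2 s ^ 2 <= R2).
  { intros s Hs. pose proof (HMx s Hs). unfold f in H. unfold R2, f. nra. }
  assert (Bw : forall s, 0 <= s <= b -> w1 s ^ 2 + w2 s ^ 2 <= R2).
  { intros s Hs. pose proof (HMx s Hs). unfold f in H. unfold R2, f. nra. }
  set (L := 80 * (1 + 8 * R2)).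
  set (V := fun s => ((y1 s - w1 s) * (y1 s - w1 s) + (y2 s - w2 s) * (y2 s - w2 s)) * exp (- (L * s))).
  set (dV := fun s => (2 * (y1 s - w1 s) * (F1 (P s) (y1 s) (y2 s) - F1 (P s) (w1 s) (w2 s))
                     + 2 * (y2 s - w2 s) * (F2 (P s) (y1 s) (y2 s) - F2 (P s) (w1 s) (w2 s))
                     - L * ((y1 s - w1 s) * (y1 s - w1 s) + (y2 s - w2 s) * (y2 s - w2 s))) * exp (- (L * s))).
  assert (HdV : forall s, 0 <= s <= b -> dV s <= 0).
  { intros s Hs. unfold dV. pose proof (lip (P s) (y1 s) (y2 s) (w1 s) (w2 s) R2 (HP s) (By s Hs) (Bw s Hs)).
    pose proof (exp_pos (- (L * s))). unfold L in *. 
    assert (2 * (y1 s - w1 s) * (F1 (P s) (y1 s) (y2 s) - F1 (P s) (w1 s) (w2 s)) +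
       2 * (y2 s - w2 s) * (F2 (P s) (y1 s) (y2 s) - F2 (P s) (w1 s) (w2 s)) -
       80 * (1 + 8 * R2) * ((y1 s - w1 s) * (y1 s - w1 s) + (y2 s - w2 s) * (y2 s - w2 s)) <= 0) by nra.
    nra. }
  intros t Ht.
  destruct (Rle_lt_or_eq_dec 0 t (proj1 Ht)) as [Htp|Ht0].
  2:{ subst t. auto. }
  destruct (MVT_gen V 0 t dV) as [c [Hc1 Hc2]].
  - rewrite Rmin_left, Rmax_right by lra. intros x Hx.
    destruct (Hd x ltac:(lra)) as [D1 [D2 [D3 D4]]].
    unfold V, dV. auto_derive.
    + repeat split; eexists; eauto.
    + replace (Derive (fun x0 : R => y1 x0) x) with (F1 (P x) (y1 x) (y2 x)) by (symmetry; apply is_derive_unique; exact D1).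
      replace (Derive (fun x0 : R => y2 x0) x) with (F2 (P x) (y1 x) (y2 x)) by (symmetry; apply is_derive_unique; exact D2).
      replace (Derive (fun x0 : R => w1 x0) x) with (F1 (P x) (w1 x) (w2 x)) by (symmetry; apply is_derive_unique; exact D3).
      replace (Derive (fun x0 : R => w2 x0) x) with (F2 (P x) (w1 x) (w2 x)) by (symmetry; apply is_derive_unique; exact D4).
      ring.
  - rewrite Rmin_left, Rmax_right by lra. intros x Hx.
    destruct (Hc x ltac:(lra)) as [A1' [A2' [A3' A4']]]. unfold V.
    apply (continuity_pt_mult (fun s => (y1 s - w1 s) * (y1 s - w1 s) + (y2 s - w2 s) * (y2 s - w2 s)) (fun s => exp (- (L * s)))).
    + apply (continuity_pt_plus (fun s => (y1 s - w1 s) * (y1 s - w1 s)) (fun s => (y2 s - w2 s) * (y2 s - w2 s))); apply cpt_sq; auto.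
    + apply continuity_pt_filterlim. apply (exd_cont (fun s => exp (- (L * s)))). auto_derive. auto.
  - rewrite Rmin_left, Rmax_right in Hc1 by lra.
    pose proof (HdV c ltac:(lra)).
    assert (V 0 = 0). { unfold V. rewrite H01, H02. ring. }
    assert (V t <= 0) by nra.
    unfold V in H1. pose proof (exp_pos (- (L * t))).
    assert ((y1 t - w1 t) * (y1 t - w1 t) + (y2 t - w2 t) * (y2 t - w2 t) <= 0).
    { destruct (Rle_dec ((y1 t - w1 t) * (y1 t - w1 t) + (y2 t - w2 t) * (y2 t - w2 t)) 0); auto. nra. }
    pose proof (Rle_0_sqr (y1 t - w1 t)). pose proof (Rle_0_sqr (y2 t - w2 t)). unfold Rsqr in *.
    assert (E1 : (y1 t - w1 t) * (y1 t - w1 t) = 0) by lra.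
    assert (E2 : (y2 t - w2 t) * (y2 t - w2 t) = 0) by lra.
    apply Rmult_integral in E1. apply Rmult_integral in E2.
    split; [destruct E1 | destruct E2]; lra.
Qed.

Lemma ball_R (x e y : R) : ball x e y <-> Rabs (y - x) < e.
Proof. reflexivity. Qed.

Lemma cont_glob a b (f : R -> R) : (forall t, continuous f t) -> cont_on a b f.
Proof.
  intros H t Ht. eapply filterlim_filter_le_1. apply filter_le_within. apply H.
Qed.

Lemma cont_eps a b (f : R -> R) t : cont_on a b f -> a <= t <= b ->
  forall eps : posreal, exists d : posreal, forall y, Rabs (y - t) < d -> a <= y <= b -> Rabs (f y - f t) < eps.
Proof.
  intros H Ht eps. pose proof (proj1 (filterlim_locally _ _) (H t Ht) eps) as [d Hd].
  exists d. intros y Hy Hy2. apply (Hd y). apply Hy. exact Hy2.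
Qed.

Lemma cont_eps_glob (f : R -> R) t : continuous f t ->
  forall eps : posreal, exists d : posreal, forall y, Rabs (y - t) < d -> Rabs (f y - f t) < eps.
Proof.
  intros H eps. pose proof (proj1 (filterlim_locally _ _) H eps) as [d Hd].
  exists d. intros y Hy. apply (Hd y). apply Hy.
Qed.

Lemma cont_on_pt a b (f : R -> R) t : cont_on a b f -> a < t < b -> continuity_pt f t.
Proof.
  intros H Ht. apply continuity_pt_filterlim. apply (proj2 (filterlim_locally _ _)). intros eps.
  destruct (cont_eps a b f t H ltac:(lra) eps) as [d Hd].
  assert (Hp : 0 < Rmin d (Rmin (t - a) (b - t))).
  { apply Rmin_pos. apply cond_pos. apply Rmin_pos; lra. }
  exists (mkposreal _ Hp). intros y Hy. change (Rabs (y - t) < Rmin d (Rmin (t - a) (b - t))) in Hy.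
  change (Rabs (f y - f t) < eps).
  pose proof (Rmin_l d (Rmin (t - a) (b - t))). pose proof (Rmin_r d (Rmin (t - a) (b - t))).
  pose proof (Rmin_l (t - a) (b - t)). pose proof (Rmin_r (t - a) (b - t)).
  apply Hd. lra. unfold Rabs in Hy; destruct Rcase_abs in Hy; lra.
Qed.

Lemma glue (f g : R -> R) : cont_on (-2) 0 f -> (forall t, continuous g t) -> g 0 = f 0 ->
  cont_on (-2) 1 (fun t => if Rle_dec t 0 then f t else g t).
Proof.
  intros Hf Hg H0 t Ht. apply (proj2 (filterlim_locally _ _)). intros eps.
  unfold within.
  destruct (Rlt_le_dec t 0) as [Hneg|Hnn].
  - destruct (cont_eps _ _ f t Hf ltac:(lra) eps) as [d Hd].
    assert (Hp : 0 < Rmin d (- t)) by (apply Rmin_pos; [apply cond_pos|lra]).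
    exists (mkposreal _ Hp). intros y Hy Dy. change (Rabs (y - t) < Rmin d (- t)) in Hy.
    pose proof (Rmin_l d (- t)). pose proof (Rmin_r d (- t)).
    assert (y < 0) by (unfold Rabs in Hy; destruct Rcase_abs in Hy; lra).
    change (Rabs ((if Rle_dec y 0 then f y else g y) - (if Rle_dec t 0 then f t else g t)) < eps).
    destruct (Rle_dec y 0); [|lra]. destruct (Rle_dec t 0); [|lra].
    apply Hd. lra. lra.
  - destruct (Rle_lt_or_eq_dec 0 t Hnn) as [Hpos|Hz].
    + destruct (cont_eps_glob g t (Hg t) eps) as [d Hd].
      assert (Hp : 0 < Rmin d t) by (apply Rmin_pos; [apply cond_pos|lra]).
      exists (mkposreal _ Hp). intros y Hy Dy. change (Rabs (y - t) < Rmin d t) in Hy.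
      pose proof (Rmin_l d t). pose proof (Rmin_r d t).
      assert (0 < y) by (unfold Rabs in Hy; destruct Rcase_abs in Hy; lra).
      change (Rabs ((if Rle_dec y 0 then f y else g y) - (if Rle_dec t 0 then f t else g t)) < eps).
      destruct (Rle_dec y 0); [lra|]. destruct (Rle_dec t 0); [lra|].
      apply Hd. lra.
    + subst t. destruct (cont_eps _ _ f 0 Hf ltac:(lra) eps) as [d1 Hd1].
      destruct (cont_eps_glob g 0 (Hg 0) eps) as [d2 Hd2].
      assert (Hp : 0 < Rmin d1 d2) by (apply Rmin_pos; apply cond_pos).
      exists (mkposreal _ Hp). intros y Hy Dy. change (Rabs (y - 0) < Rmin d1 d2) in Hy.
      pose proof (Rmin_l d1 d2). pose proof (Rmin_r d1 d2).
      change (Rabs ((if Rle_dec y 0 then f y else g y) - (if Rle_dec 0 0 then f 0 else g 0)) < eps).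
      destruct (Rle_dec 0 0); [|lra].
      destruct (Rle_dec y 0).
      * apply Hd1. lra. destruct Dy; lra.
      * rewrite <- H0. apply Hd2. lra.
Qed.

Lemma end_eq (f g : R -> R) : cont_on (-2) 1 f -> cont_on (-2) 1 g -> (forall t, 0 < t < 1 -> f t = g t) -> f 1 = g 1.
Proof.
  intros Hf Hg Heq.
  apply Rminus_diag_uniq. apply Rabs_eq_0.
  apply Rle_antisym; [|apply Rabs_pos].
  apply le_epsilon. intros e He. rewrite Rplus_0_l.
  assert (He2 : 0 < e / 2) by lra.
  destruct (cont_eps _ _ f 1 Hf ltac:(lra) (mkposreal _ He2)) as [d1 Hd1].
  destruct (cont_eps _ _ g 1 Hg ltac:(lra) (mkposreal _ He2)) as [d2 Hd2].
  simpl in Hd1, Hd2.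
  set (s := Rmax (1/2) (1 - Rmin d1 d2 / 2)).
  assert (Hs : 1/2 <= s < 1).
  { unfold s. pose proof (Rmax_l (1/2) (1 - Rmin d1 d2 / 2)).
    assert (0 < Rmin d1 d2) by (apply Rmin_pos; apply cond_pos).
    unfold Rmax; destruct Rle_dec; lra. }
  assert (Hsd : Rabs (s - 1) < Rmin d1 d2).
  { assert (0 < Rmin d1 d2) by (apply Rmin_pos; apply cond_pos).
    rewrite Rabs_left by lra. unfold s, Rmax. destruct Rle_dec; lra. }
  pose proof (Rmin_l d1 d2). pose proof (Rmin_r d1 d2).
  pose proof (Hd1 s ltac:(lra) ltac:(lra)). pose proof (Hd2 s ltac:(lra) ltac:(lra)).
  rewrite (Heq s ltac:(lra)) in H1.
  replace (f 1 - g 1) with (- (g s - f 1) + (g s - g 1)) by ring.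
  eapply Rle_trans. apply Rabs_triang. rewrite Rabs_Ropp. lra.
Qed.

Definition Y1 (s:R) := exp (K s) * cos s.
Definition Y2 (s:R) := exp (K s) * (- sin s).
Definition Y1d (s:R) := exp (K s) * (aa s / bb s) * cos s + exp (K s) * (- sin s).
Definition Y2d (s:R) := exp (K s) * (aa s / bb s) * (- sin s) + exp (K s) * (- cos s).

Lemma bb_pos s : 0 < bb s.
Proof. pose proof (bb_bounds s). lra. Qed.

Lemma Y1_deriv s : is_derive Y1 s (Y1d s).
Proof.
  unfold Y1, Y1d. auto_derive.
  - eexists; apply K_deriv.
  - replace (Derive (fun x : R => K x) s) with (aa s / bb s) by (symmetry; apply is_derive_unique; apply K_deriv).
    ring.
Qed.
Lemma Y2_deriv s : is_derive Y2 s (Y2d s).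
Proof.
  unfold Y2, Y2d. auto_derive.
  - eexists; apply K_deriv.
  - replace (Derive (fun x : R => K x) s) with (aa s / bb s) by (symmetry; apply is_derive_unique; apply K_deriv).
    ring.
Qed.

Lemma exp2K s : exp (2 * K s) = exp (K s) * exp (K s).
Proof. rewrite <- exp_plus. f_equal. ring. Qed.

Lemma match1 s : F1 (qf s) (Y1 s) (Y2 s) = / h s * Y1d s.
Proof.
  unfold h. rewrite Rinv_inv. rewrite exp2K.
  assert (E : F1 (qf s) (Y1 s) (Y2 s) = 40 * (1 + exp (K s) * exp (K s) * (cos s ^2 + sin s ^2)) * exp (K s) * Bu1 s)
    by (unfold F1, Y1, Y2, Bu1; ring).
  rewrite E, CS1, <- Bu1_eq. unfold Y1d. pose proof (bb_pos s). field. lra.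
Qed.
Lemma match2 s : F2 (qf s) (Y1 s) (Y2 s) = / h s * Y2d s.
Proof.
  unfold h. rewrite Rinv_inv. rewrite exp2K.
  assert (E : F2 (qf s) (Y1 s) (Y2 s) = 40 * (1 + exp (K s) * exp (K s) * (cos s ^2 + sin s ^2)) * exp (K s) * Bu2 s)
    by (unfold F2, Y1, Y2, Bu2; ring).
  rewrite E, CS1, <- Bu2_eq. unfold Y2d. pose proof (bb_pos s). field. lra.
Qed.

Lemma vnorm_Y s : vnorm (Y1 s, Y2 s) = exp (K s).
Proof.
  unfold vnorm, Y1, Y2; cbn [fst snd].
  replace ((exp (K s) * cos s) ^ 2 + (exp (K s) * - sin s) ^ 2) with (exp (K s) ^ 2 * (cos s ^ 2 + sin s ^ 2)) by ring.
  rewrite CS1, Rmult_1_r. apply sqrt_pow2. left; apply exp_pos.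
Qed.

Lemma Y1_cont s : continuous Y1 s.
Proof. apply exd_cont. eexists. apply Y1_deriv. Qed.
Lemma Y2_cont s : continuous Y2 s.
Proof. apply exd_cont. eexists. apply Y2_deriv. Qed.
Lemma qf_cont s : continuous qf s.
Proof. apply exd_cont. unfold qf. auto_derive. auto. Qed.

Lemma choose_X M : 0 < M -> exists X, 0 <= X /\ qf X = 0 /\ 2 * M <= exp (K X).
Proof.
  intros HM. pose proof PI_RGT_0 as HPI.
  destruct (nfloor_ex (Rmax 0 (6 * (ln (2*M) + 1) / PI)) (Rmax_l _ _)) as [n0 [_ Hn0]].
  set (X := PI / 4 + INR (S n0) * PI).
  assert (HS : INR (S n0) = INR n0 + 1) by apply S_INR.
  assert (Hn : 6 * (ln (2*M) + 1) / PI <= INR (S n0)).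
  { pose proof (Rmax_r 0 (6 * (ln (2*M) + 1) / PI)). lra. }
  assert (Hn' : 6 * (ln (2*M) + 1) <= INR (S n0) * PI).
  { apply (Rmult_le_compat_r PI) in Hn; [|lra]. unfold Rdiv in Hn. rewrite Rmult_assoc, Rinv_l, Rmult_1_r in Hn by lra. exact Hn. }
  pose proof (pos_INR n0).
  assert (HX0 : 0 <= X) by (unfold X; nra).
  exists X. split; auto. split.
  - unfold qf. rewrite <- sin_2a. unfold X.
    replace (2 * (PI / 4 + INR (S n0) * PI)) with (PI/2 + 2 * INR (S n0) * PI) by field.
    rewrite sin_period, sin_PI2. lra.
  - pose proof (K_low X ltac:(lra)).
    rewrite <- (exp_ln (2 * M)) by lra. apply exp_le. unfold X in *. lra.
Qed.

Lemma comp_cont (f g : R -> R) t : continuous g t -> continuous f (g t) -> continuous (fun s => f (g s)) t.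
Proof. intros; apply (continuous_comp g f); auto. Qed.

Theorem lemma1 :
  exists c : R, 0 < c /\
  forall M : R, 0 < M ->
  exists (z10 x01 x02 : R -> R),
    cont_on (-2) 0 z10 /\
    (forall t, -2 <= t <= 0 -> Rabs (z10 t) <= 1) /\
    z10 0 = 0 /\
    cont_on (-2) 0 x01 /\ cont_on (-2) 0 x02 /\
    (forall t, -2 <= t <= 0 -> vnorm (x01 t, x02 t) <= 1) /\
    forall z20 : R -> R,
      cont_on (-2) 0 z20 ->
      (forall t, -2 <= t <= -1 -> z20 t = 1) ->
      (exists x1 x2 z1 z2 : R -> R, is_solution c x01 x02 z10 z20 x1 x2 z1 z2) /\
      (forall x1 x2 z1 z2 : R -> R,
         is_solution c x01 x02 z10 z20 x1 x2 z1 z2 ->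
         2 * M <= vnorm (x1 1, x2 1)).
Proof.
  exists 40. split; [lra|]. intros M HM.
  destruct (choose_X M HM) as [X [HX0 [HqX HKX]]].
  destruct (make_Theta X HX0) as [p0 [Th [Hp0 [T1 [T3 [T4 [T5 T6]]]]]]].
  set (z10 := fun s => qf (Th (s + 1))).
  assert (Hz10c : forall t, continuous z10 t).
  { intros t. unfold z10. apply (comp_cont qf (fun s => Th (s + 1))).
    apply (comp_cont Th (fun s => s + 1)). apply exd_cont. auto_derive. auto. apply T5. apply qf_cont. }
  assert (Hz10pos : forall t, 0 < t -> z10 t = 0).
  { intros t Ht. unfold z10. rewrite T4 by lra. exact HqX. }
  set (x1 := fun t => Y1 (Th t)). set (x2 := fun t => Y2 (Th t)).
  assert (Hx1c : forall t, continuous x1 t).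
  { intros t. apply (comp_cont Y1 Th). apply T5. apply Y1_cont. }
  assert (Hx2c : forall t, continuous x2 t).
  { intros t. apply (comp_cont Y2 Th). apply T5. apply Y2_cont. }
  assert (Dx1 : forall t, 0 < t < 1 -> is_derive x1 t (F1 (qf (Th t)) (x1 t) (x2 t))).
  { intros t Ht. unfold x1, x2. rewrite match1.
    apply (is_derive_comp Y1 Th t (Y1d (Th t)) (/ h (Th t))). apply Y1_deriv. apply T6; auto. }
  assert (Dx2 : forall t, 0 < t < 1 -> is_derive x2 t (F2 (qf (Th t)) (x1 t) (x2 t))).
  { intros t Ht. unfold x1, x2. rewrite match2.
    apply (is_derive_comp Y2 Th t (Y2d (Th t)) (/ h (Th t))). apply Y2_deriv. apply T6; auto. }
  exists z10, (fun _ => Y1 p0), (fun _ => Y2 p0).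
  split. { apply cont_glob. auto. }
  split. { intros t _. unfold z10. pose proof (qf_bounds (Th (t+1))). rewrite Rabs_pos_eq; lra. }
  split. { unfold z10. rewrite T4 by lra. exact HqX. }
  split. { apply cont_glob. intros; apply continuous_const. }
  split. { apply cont_glob. intros; apply continuous_const. }
  split. { intros t _. rewrite vnorm_Y. rewrite <- exp_0. apply exp_le. apply K_up. lra. }
  intros z20 Hz20c Hz20one.
  assert (Hsolx : forall t, -2 <= t <= 0 -> x1 t = Y1 p0 /\ x2 t = Y2 p0).
  { intros t Ht. unfold x1, x2. rewrite T3 by lra. auto. }
  split.
  - set (z2 := fun t => if Rle_dec t 0 then z20 t else z20 0 * exp (- t)).
    exists x1, x2, z10, z2.
    split. { intros t Ht. split; [apply Hsolx; auto|]. split; [apply Hsolx; auto|]. split; auto.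
             unfold z2. destruct Rle_dec; [auto|lra]. }
    split. { apply cont_glob; auto. }
    split. { apply cont_glob; auto. }
    split. { apply cont_glob; auto. }
    split. { apply glue; auto. intros t. apply exd_cont. auto_derive. auto. rewrite Ropp_0, exp_0. ring. }
    intros t Ht.
    assert (E1 : z10 (t - 1) = qf (Th t)) by (unfold z10; f_equal; f_equal; ring).
    assert (E2 : z2 (t - 2) = 1).
    { unfold z2. destruct Rle_dec; [|lra]. apply Hz20one. lra. }
    rewrite E1, E2, rhs1, rhs2, (phi_id (qf (Th t))) by apply qf_bounds.
    split; [apply Dx1; auto|]. split; [apply Dx2; auto|]. split.
    + rewrite (Hz10pos t) by lra. rewrite Ropp_0.
      apply (is_derive_ext_loc (fun _ => 0)). 
      { exists (mkposreal t (proj1 Ht)). intros y Hy. change (Rabs (y - t) < t) in Hy.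
        rewrite Hz10pos. auto. unfold Rabs in Hy; destruct Rcase_abs in Hy; lra. }
      apply (@is_derive_const R_AbsRing R_NormedModule).
    + assert (E3 : z2 t = z20 0 * exp (- t)) by (unfold z2; destruct Rle_dec; [lra|auto]).
      rewrite E3.
      apply (is_derive_ext_loc (fun s => z20 0 * exp (- s))).
      { exists (mkposreal t (proj1 Ht)). intros y Hy. change (Rabs (y - t) < t) in Hy.
        unfold z2. destruct Rle_dec; auto. unfold Rabs in Hy; destruct Rcase_abs in Hy; lra. }
      auto_derive. auto. ring.
  - intros y1 y2 w1 w2 [S1 [S2 [S3 [S4 [S5 S6]]]]].
    assert (Hint : forall t, 0 < t < 1 -> y1 t = x1 t /\ y2 t = x2 t).
    { intros t Ht.
      apply (gronwall (fun s => qf (Th s)) y1 y2 x1 x2 t); try lra.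
      - intros s. apply qf_bounds.
      - intros s Hs. split; [apply (cont_on_pt (-2) 1); auto; lra|].
        split; [apply (cont_on_pt (-2) 1); auto; lra|].
        split; apply continuity_pt_filterlim; [apply Hx1c|apply Hx2c].
      - intros s Hs. destruct (S6 s ltac:(lra)) as [D1 [D2 _]].
        assert (E1 : w1 (s - 1) = qf (Th s)).
        { destruct (S1 (s-1) ltac:(lra)) as [_ [_ [W1 _]]]. rewrite W1. unfold z10. f_equal; f_equal; ring. }
        assert (E2 : w2 (s - 2) = 1).
        { destruct (S1 (s-2) ltac:(lra)) as [_ [_ [_ W2]]]. rewrite W2. apply Hz20one. lra. }
        rewrite E1, E2, rhs1, rhs2, (phi_id (qf (Th s))) in * by apply qf_bounds.
        split; auto. split; auto. split; [apply Dx1|apply Dx2]; lra.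
      - destruct (S1 0 ltac:(lra)) as [W _]. rewrite W. symmetry; apply Hsolx; lra.
      - destruct (S1 0 ltac:(lra)) as [_ [W _]]. rewrite W. symmetry; apply Hsolx; lra. }
    assert (Ey1 : y1 1 = x1 1).
    { apply end_eq; auto. apply cont_glob; auto. intros t Ht; apply Hint; auto. }
    assert (Ey2 : y2 1 = x2 1).
    { apply end_eq; auto. apply cont_glob; auto. intros t Ht; apply Hint; auto. }
    rewrite Ey1, Ey2. unfold x1, x2. rewrite vnorm_Y, T4 by lra. exact HKX.
Qed.
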